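(* Let $(X_t)_{t\geq0}$ be a right-continuous stochastic process on a filtered probability space $(\Omega,\mathscr F,\mathbb P;(\mathscr F_t)_{t\geq0})$. Suppose that for some $Y\in L^1(\Omega)$ and $A>0$, for every $t\geq0$, $|X_t|\leq Y$ and $\mathbb E(X_t\,|\,\mathscr F_t)\leq A$ $\mathbb P$-a.s. Then for any finite stopping time $\tau$, $\mathbb E(X_\tau\,|\,\mathscr F_\tau)\leq A$ $\mathbb P$-a.s. *)

(* Defs.v *)
From HB Require Import structures.
From mathcomp Require Import all_boot all_order all_algebra.
From mathcomp Require Import all_classical all_reals all_analysis.
Set Implicit Arguments. Unset Strict Implicit. Unset Printing Implicit Defensive.
Import Order.TTheory GRing.Theory Num.Theory.
Import numFieldNormedType.Exports.
Local Open Scope classical_set_scope.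
Local Open Scope ring_scope.

Definition is_filtration d (T : measurableType d) (R : realType)
  (F : R -> set (set T)) : Prop :=
  (forall t, 0 <= t -> sigma_algebra setT (F t)) /\
  (forall t, 0 <= t -> F t `<=` measurable) /\
  (forall s t, 0 <= s -> s <= t -> F s `<=` F t).

Definition is_stopping_time (T : Type) (R : realType)
  (F : R -> set (set T)) (tau : T -> R) : Prop :=
  (forall w, 0 <= tau w) /\
  (forall t, 0 <= t -> F t [set w | tau w <= t]).

Definition stopped_sigma d (T : measurableType d) (R : realType)
  (F : R -> set (set T)) (tau : T -> R) : set (set T) :=
  [set A | measurable A /\
           forall t, 0 <= t -> F t (A `&` [set w | tau w <= t])].

Definition measurable_wrt (T : Type) (R : realType) (G : set (set T))
  (W : T -> R) : Prop :=
  forall B : set R, measurable B -> G (W @^-1` B).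

Definition cond_exp_version d (T : measurableType d) (R : realType)
  (P : probability T R) (G : set (set T)) (Z W : T -> R) : Prop :=
  measurable_wrt G W /\
  P.-integrable setT (fun w => (W w)%:E) /\
  (forall A, G A ->
     (\int[P]_(w in A) (W w)%:E = \int[P]_(w in A) (Z w)%:E)%E).

(* "E(Z | G) <= A  P-a.s." (as a statement about the conditional expectation,
   which is defined up to P-a.s. equality): every version is <= A a.s. *)
Definition cond_exp_le d (T : measurableType d) (R : realType)
  (P : probability T R) (G : set (set T)) (Z : T -> R) (A : R) : Prop :=
  forall W, cond_exp_version P G Z W -> {ae P, forall w, W w <= A}.

Definition stopped_process (T : Type) (R : Type) (X : R -> T -> R)
  (tau : T -> R) : T -> R := fun w => X (tau w) w.

(* Main.v *)
Require Import Defs.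
From HB Require Import structures.
From mathcomp Require Import all_boot all_order all_algebra.
From mathcomp Require Import all_classical all_reals all_analysis.
From mathcomp Require Import measurable_realfun.
Import Order.TTheory GRing.Theory Num.Theory.
Import numFieldNormedType.Exports.
Local Open Scope classical_set_scope.
Local Open Scope ring_scope.
Set Implicit Arguments. Unset Strict Implicit. Unset Printing Implicit Defensive.

Section idG.
Context d (T : measurableType d) (G : set (set T)).
Lemma sGsub (GP : G `<=` measurable) : <<s G >> `<=` measurable.
Proof. by apply: smallest_sub => //; exact: sigma_algebra_measurable. Qed.
Lemma measurable_idG (GP : G `<=` measurable) :
  measurable_fun [set: T] (id : T -> g_sigma_algebraType G).
Proof. by move=> _ B mB; rewrite setTI; exact: sGsub. Qed.
Definition idG (GP : G `<=` measurable) : {mfun T >-> g_sigma_algebraType G} :=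
  MeasurableFun.Pack (MeasurableFun.Class (isMeasurableFun.Build _ _ _ _ _ (measurable_idG GP))).
End idG.

Definition nuG d (T : measurableType d) (R : realType) (P : probability T R)
  (G : set (set T)) (GP : G `<=` measurable) (Z : T -> R)
  (iZ : P.-integrable setT (fun x => (Z x)%:E)) : set (g_sigma_algebraType G) -> \bar R :=
  fun A => (\int[P]_(x in A) (Z x)%:E)%E.

Section nuG.
Context d (T : measurableType d) (R : realType) (P : probability T R)
  (G : set (set T)) (GP : G `<=` measurable) (Z : T -> R)
  (iZ : P.-integrable setT (fun x => (Z x)%:E)).
Local Open Scope ereal_scope.
Local Notation nu := (nuG GP iZ).

Let nu0 : nu set0 = 0. Proof. by rewrite /nuG integral_set0. Qed.
Let finnu A : measurable A -> nu A \is a fin_num.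
Proof.
move=> mA; have mA' := sGsub GP mA.
by apply: integrable_fin_num => //=; apply: (integrableS measurableT _ _ iZ).
Qed.
Let snu : semi_sigma_additive nu.
Proof.
move=> F mF tF mUF.
exact: (@charge_semi_sigma_additive _ _ _ (induced_charge iZ) F
  (fun n => sGsub GP (mF n)) tF (sGsub GP mUF)).
Qed.
HB.instance Definition _ := isCharge.Build _ _ _ nu nu0 finnu snu.
End nuG.

Section cexp.
Context d (T : measurableType d) (R : realType) (P : probability T R).
Local Open Scope ereal_scope.

Lemma cexp_exists (G : set (set T)) (Z : T -> R) :
  sigma_algebra setT G -> G `<=` measurable ->
  P.-integrable setT (fun x => (Z x)%:E) ->
  exists W : T -> R,
    (forall B : set R, measurable B -> G (W @^-1` B)) /\
    P.-integrable setT (fun w => (W w)%:E) /\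
    (forall A, G A -> \int[P]_(w in A) (W w)%:E = \int[P]_(w in A) (Z w)%:E).
Proof.
move=> sG GP iZ.
pose mu := distribution P (idG GP).
have numu : nuG GP iZ `<< mu.
  apply/null_content_dominatesP => A mA muA.
  rewrite /nuG; have mA' := sGsub GP mA.
  apply: null_set_integral => //.
  exact: (measurable_funS measurableT (@subsetT _ _) (measurable_int _ iZ)).
have fRN := Radon_Nikodym_fin_num _ numu.
have iRN := Radon_Nikodym_integrable numu.
have RNI := Radon_Nikodym_integral numu.
set f := Radon_Nikodym _ _ in fRN iRN RNI.
have ff : (fun x => (fine (f x))%:E) = f by apply/funext => x; rewrite fineK.
have mf := measurable_int _ iRN.
have GE : <<s G >> = G by exact: sigma_algebra_id.
have ff' : (fun w : T => (fine (f w))%:E) = f \o (idG GP) by rewrite ff.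
have mfT : measurable_fun [set: T] (f \o (idG GP)).
  exact: measurableT_comp mf (measurable_idG GP).
have iT : P.-integrable [set: T] (f \o (idG GP)).
  apply/integrableP; split => //.
  have := (integrableP _ _ _ iRN).2.
  rewrite ge0_integral_pushforward//.
  have := measurableT_comp (@abse_measurable R setT) mf; exact.
exists (fun x => fine (f x)); split; [|split].
- move=> B mB; rewrite -GE.
  have mWf : measurable_fun [set: g_sigma_algebraType G] (fine \o f).
    apply/measurable_EFinP.
    by rewrite (_ : EFin \o (fine \o f) = f)// -ff.
  have := mWf measurableT _ mB.
  by rewrite setTI.
- by rewrite ff'.
- move=> A GA; rewrite ff'.
  have mA : (G.-sigma).-measurable (A : set (g_sigma_algebraType G)) by rewrite /measurable /= GE.
  transitivity (nuG GP iZ A); last by [].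
  rewrite RNI// integral_pushforward//.
  have mA' : measurable A := GP _ GA.
  exact: (integrableS measurableT mA' (@subsetT _ _) iT).
Qed.

Lemma cexp_le_int (G : set (set T)) (Z : T -> R) (A : R) :
  sigma_algebra setT G -> G `<=` measurable ->
  P.-integrable setT (fun x => (Z x)%:E) ->
  cond_exp_le P G Z A ->
  forall B, G B -> \int[P]_(w in B) (Z w)%:E <= A%:E * P B.
Proof.
move=> sG GP iZ hle B GB.
have [W [mW [iW eW]]] := cexp_exists sG GP iZ.
have aeW : {ae P, forall w, (W w <= A)%R} := hle W (conj mW (conj iW eW)).
have mB : measurable B := GP _ GB.
have mWT : measurable_fun setT W.
  by move=> _ C mC; rewrite setTI; apply: GP; exact: mW.
rewrite -eW//.
have iWB : P.-integrable B (EFin \o W) by exact: (integrableS measurableT mB (@subsetT _ _) iW).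
have iAB : P.-integrable B (EFin \o cst A) by exact: finite_measure_integrable_cst.
have fW : \int[P]_(w in B) (W w)%:E \is a fin_num by exact: integrable_fin_num.
rewrite -integral_cst// -subre_ge0; last first.
  by rewrite integral_cst// fin_numM// fin_num_measure.
rewrite -(integralB_EFin mB iAB iWB).
rewrite (ae_eq_integral (fun w => (Num.max (A - W w) 0)%R%:E))//.
- by apply: integral_ge0 => w _; rewrite lee_fin le_max lexx orbT.
- apply/measurable_EFinP; apply: measurable_funS (measurableT) (@subsetT _ _) _.
  exact: measurable_funB.
- apply/measurable_EFinP; apply: measurable_funS (measurableT) (@subsetT _ _) _.
  apply: measurable_maxr => //; exact: measurable_funB.
- apply: filterS aeW => w WA _ /=.
  by rewrite /= (_ : Num.max _ _ = (A - W w)%R)// max_l// subr_ge0.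
Qed.
End cexp.

Section main.
Context d (T : measurableType d) (R : realType) (P : probability T R)
  (F : R -> set (set T)) (X : R -> T -> R) (Y : T -> R) (A : R) (tau : T -> R).
Hypothesis hF : is_filtration F.
Hypothesis hmX : forall t, 0 <= t -> measurable_fun setT (X t).
Hypothesis hrc : forall w t, 0 <= t -> (fun s => X s w) @ t^'+ --> X t w.
Hypothesis iY : P.-integrable setT (fun w => (Y w)%:E).
Hypothesis hY : forall t, 0 <= t -> {ae P, forall w, `|X t w| <= Y w}.
Hypothesis htau : is_stopping_time F tau.
Hypothesis hce : forall t, 0 <= t -> cond_exp_le P (F t) (X t) A.

Lemma FP t : 0 <= t -> F t `<=` measurable. Proof. by case: hF => _ [+ _]; apply. Qed.
Lemma sF t : 0 <= t -> sigma_algebra setT (F t). Proof. by case: hF => + _; apply. Qed.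
Lemma Fmono s t : 0 <= s -> s <= t -> F s `<=` F t. Proof. by case: hF => _ [_]; apply. Qed.
Lemma tau_ge0 w : 0 <= tau w. Proof. by case: htau. Qed.
Lemma Ftau_le t : 0 <= t -> F t [set w | tau w <= t]. Proof. by case: htau => _; apply. Qed.

Lemma mtau_le t : measurable [set w | tau w <= t].
Proof.
have [t0|t0] := leP 0 t; first by apply: (FP t0); exact: Ftau_le.
rewrite (_ : [set w | _] = set0) // -subset0 => w /= h.
by have := le_trans (tau_ge0 w) h; rewrite leNgt t0.
Qed.

Lemma iX t : 0 <= t -> P.-integrable setT (fun w => (X t w)%:E).
Proof.
move=> t0; apply/integrableP; split; first exact/measurable_EFinP/hmX.
apply: (le_lt_trans _ (integrableP _ _ _ (integrable_abse iY)).2).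
apply: ae_ge0_le_integral => //.
- by apply/measurableT_comp => //; exact/measurable_EFinP/hmX.
- apply/measurableT_comp => //; apply/measurableT_comp => //.
  exact: (measurable_int _ iY).
- apply: filterS (hY t0) => w h _ /=.
  rewrite lee_fin normr_id; apply: (le_trans h); exact: ler_norm.
Qed.

Definition cn (n : nat) : R := n.+1%:R.
Definition kn n w : nat := `|Num.ceil (tau w * cn n)|%N.
Definition tn n w : R := (kn n w)%:R / cn n.
Definition Xn n w := X (tn n w) w.

Lemma cn_gt0 n : 0 < cn n. Proof. by rewrite /cn ltr0n. Qed.

Lemma kn_int n w : ((kn n w)%:R : R) = (Num.ceil (tau w * cn n))%:~R.
Proof.
rewrite /kn -[in RHS](@gez0_abs (Num.ceil _)) //.
by rewrite ceil_ge0 (lt_le_trans _ (mulr_ge0 (tau_ge0 w) (ltW (cn_gt0 n)))) // ltrN10.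
Qed.

Lemma kn_le n w k : (kn n w <= k)%N = (tau w <= k%:R / cn n).
Proof.
rewrite ler_pdivlMr ?cn_gt0 // (_ : (k%:R : R) = (k%:Z)%:~R) // -ceil_le_int -lez_nat /kn gez0_abs //.
by rewrite ceil_ge0 (lt_le_trans _ (mulr_ge0 (tau_ge0 w) (ltW (cn_gt0 n)))) // ltrN10.
Qed.

Lemma tn_ge n w : tau w <= tn n w.
Proof. by rewrite /tn ler_pdivlMr ?cn_gt0 // kn_int ceil_ge. Qed.

Lemma tn_lt n w : tn n w < tau w + (cn n)^-1.
Proof.
rewrite /tn ltr_pdivrMr ?cn_gt0 // mulrDl mulVf ?gt_eqF ?cn_gt0 // kn_int.
rewrite -ltrBlDr; have := ceilB1_lt (tau w * cn n).
by rewrite intrB.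
Qed.

Lemma tn_ge0 n w : 0 <= tn n w.
Proof. exact: le_trans (tau_ge0 w) (tn_ge n w). Qed.


Lemma mkn_le n k : measurable [set w | (kn n w <= k)%N].
Proof.
rewrite (_ : [set w | _] = [set w | tau w <= k%:R / cn n]); first exact: mtau_le.
by apply/seteqP; split => w /=; rewrite kn_le.
Qed.

Lemma mkn_eq n k : measurable [set w | kn n w = k].
Proof.
case: k => [|j].
  rewrite (_ : [set w | _] = [set w | (kn n w <= 0)%N]); first exact: mkn_le.
  by apply/seteqP; split => w /=; [move=> ->|rewrite leqn0 => /eqP].
rewrite (_ : [set w | _] = [set w | (kn n w <= j.+1)%N] `\` [set w | (kn n w <= j)%N]).
  by apply: measurableD; exact: mkn_le.
apply/seteqP; split => w /=; first by move=> ->; rewrite ltnn.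
by move=> [h1 /negP]; rewrite -ltnNge => h2; apply/eqP; rewrite eqn_leq h1 h2.
Qed.

Lemma mXn n : measurable_fun setT (Xn n).
Proof.
rewrite (_ : setT = \bigcup_k [set w | kn n w = k]); last first.
  by apply/seteqP; split => w // _; exists (kn n w).
apply/measurable_fun_bigcup; first exact: mkn_eq.
move=> k; apply: (eq_measurable_fun (X (k%:R / cn n))).
  by move=> w; rewrite inE /= => hk; rewrite /Xn /tn hk.
apply: measurable_funTS; apply: hmX.
by rewrite divr_ge0 // ltW // cn_gt0.
Qed.

Lemma Xn_cvg w : Xn ^~ w @ \oo --> X (tau w) w.
Proof.
apply/cvgrPdist_lt => e e0.
have /cvgrPdist_lt/(_ e e0) := @hrc w (tau w) (tau_ge0 w).
move=> /nbhs_ballP[δ /= δ0 Hδ].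
near=> n.
have hn : (cn n)^-1 < δ by near: n; exact: (near_infty_natSinv_lt (PosNum δ0)).
have := tn_ge n w; rewrite le_eqVlt => /orP[/eqP eq|lt].
  by rewrite /Xn -eq subrr normr0.
apply: Hδ => //; rewrite /ball /= distrC ger0_norm ?subr_ge0 ?tn_ge //.
rewrite ltrBlDl; apply: (lt_trans (tn_lt n w)); by rewrite ltrD2l.
Unshelve. all: by end_near.
Qed.

Lemma mXtau : measurable_fun setT (stopped_process X tau).
Proof.
apply: (@measurable_fun_cvg _ _ _ _ Xn); first exact: mXn.
move=> w _; exact: Xn_cvg.
Qed.

Lemma Xn_dom : {ae P, forall w n, `|Xn n w| <= Y w}.
Proof.
apply: ae_foralln => n.
have : \forall w \ae P, forall k, `|X (k%:R / cn n) w| <= Y w.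
  apply: ae_foralln => k; apply: hY.
  by rewrite divr_ge0 // ltW // cn_gt0.
by apply: filterS => w h; exact: h (kn n w).
Qed.


Lemma L1 t : 0 <= t -> forall B, F t B ->
  (\int[P]_(w in B) (X t w)%:E <= A%:E * P B)%E.
Proof. move=> t0; exact: cexp_le_int (sF t0) (FP t0) (iX t0) (hce t0). Qed.

Lemma GD (G : set (set T)) (A1 A2 : set T) : sigma_algebra setT G ->
  G A1 -> G A2 -> G (A1 `\` A2).
Proof.
move=> sG h1 h2; have E := sigma_algebra_id sG.
have h1' : <<s G >> A1 by rewrite E.
have h2' : <<s G >> A2 by rewrite E.
have := @measurableD _ (g_sigma_algebraType G) A1 A2 h1' h2'.
by rewrite /measurable /= E.
Qed.

Lemma GI (G : set (set T)) (A1 A2 : set T) : sigma_algebra setT G ->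
  G A1 -> G A2 -> G (A1 `&` A2).
Proof.
move=> sG h1 h2; have E := sigma_algebra_id sG.
have h1' : <<s G >> A1 by rewrite E.
have h2' : <<s G >> A2 by rewrite E.
have := @measurableI _ (g_sigma_algebraType G) A1 A2 h1' h2'.
by rewrite /measurable /= E.
Qed.

Lemma Xn_eq n k w : kn n w = k -> Xn n w = X (k%:R / cn n) w.
Proof. by rewrite /Xn /tn => ->. Qed.

Lemma kcn_ge0 n k : 0 <= k%:R / cn n.
Proof. by rewrite divr_ge0 // ltW // cn_gt0. Qed.

Lemma FB B n m : stopped_sigma F tau B ->
  F (m%:R / cn n) (B `&` [set w | (kn n w <= m)%N]).
Proof.
move=> [mB hB]; rewrite (_ : [set w | _] = [set w | tau w <= m%:R / cn n]).
  exact: hB (kcn_ge0 n m).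
by apply/seteqP; split => w /=; rewrite kn_le.
Qed.

Local Open Scope ereal_scope.

Lemma step B n m : stopped_sigma F tau B ->
  \int[P]_(w in B `&` [set w | (kn n w <= m)%N]) (Xn n w)%:E <=
  A%:E * P (B `&` [set w | (kn n w <= m)%N]).
Proof.
move=> hB; have mB : measurable B by case: hB.
elim: m => [|m IH].
  rewrite (eq_integral (fun w => (X (0%:R / cn n) w)%:E)); last first.
    move=> w; rewrite inE => -[_ /=]; rewrite leqn0 => /eqP h.
    by rewrite (Xn_eq h).
  exact: L1 (kcn_ge0 n 0) _ (FB n 0 hB).
set Sm := B `&` [set w | (kn n w <= m)%N].
set Sm1 := B `&` [set w | (kn n w <= m.+1)%N].
set D := Sm1 `\` Sm.
have mSm : measurable Sm by apply: measurableI => //; exact: mkn_le.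
have mSm1 : measurable Sm1 by apply: measurableI => //; exact: mkn_le.
have mD : measurable D by exact: measurableD.
have eS : Sm1 = Sm `|` D.
  rewrite /D setDUK // => w [Bw /= h]; split => //; exact: leqW.
have dS : Sm `&` D = set0.
  by apply/seteqP; split => w // [h1 [_ h2]].
have FD : F (m.+1%:R / cn n) D.
  apply: GD; first exact: sF (kcn_ge0 n m.+1).
    exact: FB.
  apply: (Fmono (kcn_ge0 n m)); last exact: FB.
  by rewrite ler_pM2r ?invr_gt0 ?cn_gt0 // ler_nat.
have eD : \int[P]_(w in D) (Xn n w)%:E = \int[P]_(w in D) (X (m.+1%:R / cn n) w)%:E.
  apply: eq_integral => w; rewrite inE => -[[Bw /= h1]] /= h2.
  rewrite (@Xn_eq n m.+1 w) //; apply/eqP; rewrite eqn_leq h1 /=.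
  by rewrite ltnNge; apply/negP => h; apply: h2; split.
rewrite eS integral_setU //; last 2 first.
  - by apply/measurable_EFinP; apply: measurable_funTS; exact: mXn.
  - by apply/disj_set2P.
rewrite measureU // ge0_muleDr //.
apply: leeD => //; rewrite eD; exact: L1 (kcn_ge0 n m.+1) _ FD.
Qed.

Lemma stepN B (N : nat) n : stopped_sigma F tau B -> B `<=` [set w | (tau w <= N%:R)%R] ->
  \int[P]_(w in B) (Xn n w)%:E <= A%:E * P B.
Proof.
move=> hB BN; have := step n (N * n.+1) hB.
rewrite (_ : B `&` _ = B) //; apply/setIidl => w Bw /=.
rewrite kn_le /cn natrM mulfK ?pnatr_eq0 //; exact: BN.
Qed.

Lemma limit B (N : nat) : stopped_sigma F tau B -> B `<=` [set w | (tau w <= N%:R)%R] ->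
  \int[P]_(w in B) (stopped_process X tau w)%:E <= A%:E * P B.
Proof.
move=> hB BN; have mB : measurable B by case: hB.
have h1 : forall n, measurable_fun B (fun w => (Xn n w)%:E).
  by move=> n; apply/measurable_EFinP; apply: measurable_funTS; exact: mXn.
have h2 : measurable_fun B (fun w => (stopped_process X tau w)%:E).
  by apply/measurable_EFinP; apply: measurable_funTS; exact: mXtau.
have h3 : {ae P, forall w, B w -> (fun n => (Xn n w)%:E) @ \oo --> (stopped_process X tau w)%:E}.
  apply: aeW => w _; apply: cvg_EFin.
    by apply: nearW.
  exact: Xn_cvg.
have h4 : P.-integrable B (fun w => (Y w)%:E).
  exact: (integrableS measurableT mB (@subsetT _ _) iY).
have h5 : {ae P, forall w n, B w -> `|(Xn n w)%:E| <= (Y w)%:E}.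
  by apply: filterS Xn_dom => w h n _; rewrite lee_fin.
have [_ _ hc] := dominated_convergence mB h1 h2 h3 h4 h5.
rewrite -(cvg_lim _ hc) //; apply: lime_le; first by apply/cvg_ex; eexists; exact: hc.
by apply: nearW => n; exact: (stepN n hB BN).
Qed.

Lemma final : cond_exp_le P (stopped_sigma F tau) (stopped_process X tau) A.
Proof.
move=> W [mW [iW eW]].
set H := [set w | (A < W w)%R].
have FH : stopped_sigma F tau H.
  have := mW `]A, +oo[%classic (measurable_itv _).
  by rewrite (_ : W @^-1` _ = H) //; apply/seteqP; split => w /=; rewrite in_itv /= andbT.
pose HN := fun N : nat => H `&` [set w | (tau w <= N%:R)%R].
have FHN N : stopped_sigma F tau (HN N).
  split; first by apply: measurableI; [case: FH|exact: mtau_le].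
  move=> t t0.
  have m0 : (0 <= Num.min (N%:R : R) t)%R by rewrite le_min ler0n t0.
  rewrite (_ : _ `&` _ = H `&` [set w | (tau w <= Num.min (N%:R : R) t)%R]).
    apply: (Fmono m0); first by rewrite ge_min lexx orbT.
    by case: FH => _; apply.
  apply/seteqP; split => w /=; rewrite le_min; first by move=> [[Hw h1] h2]; rewrite h1 h2.
  by move=> [Hw /andP[h1 h2]].
have P0 N : P (HN N) = 0.
  have mHN : measurable (HN N) by case: (FHN N).
  have le1 := limit (FHN N) (fun w => fun h : HN N w => h.2).
  rewrite -eW // in le1.
  have iWN : P.-integrable (HN N) (EFin \o W) by exact: (integrableS measurableT mHN (@subsetT _ _) iW).
  have iAN : P.-integrable (HN N) (EFin \o cst A) by exact: finite_measure_integrable_cst.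
  have mWT : measurable_fun setT W.
    move=> _ C mC; rewrite setTI; case: (mW C mC) => + _; exact.
  have eg : \int[P]_(w in HN N) (W w - A)%:E = 0.
    apply/eqP; rewrite eq_le; apply/andP; split.
      rewrite (eq_integral (fun w => (W w)%:E - (cst A w)%:E)) //.
      rewrite integralB_EFin // (_ : \int[P]_(x in HN N) (cst A x)%:E = A%:E * P (HN N)); last first.
        by rewrite -integral_cst.
      rewrite sube_le0 //.
    by apply: integral_ge0 => w [Hw _]; rewrite lee_fin subr_ge0 ltW.
  have : \int[P]_(w in HN N) `|(W w - A)%:E| = 0.
    rewrite -eg; apply: eq_integral => w; rewrite inE => -[Hw _].
    by rewrite gee0_abs // lee_fin subr_ge0 ltW.
  move/ae_eq_integral_abs => /(_ mHN) [].
    apply/measurable_EFinP; apply: measurable_funTS; exact: measurable_funB.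
  move=> N0 [mN0 PN0 sub].
  apply: (subset_measure0 mHN mN0) => // w HNw; apply: sub => /= h.
  have := h HNw; case: HNw => Hw _ /eqP; rewrite /cst /= eqe subr_eq0 => /eqP WA.
  by move: Hw; rewrite /H /= WA ltxx.
have negH : P.-negligible (\bigcup_N HN N).
  apply: negligible_bigcup => N.
  have mHN : measurable (HN N) by case: (FHN N).
  by exists (HN N); split => //; exact: P0.
change (P.-negligible (~` [set w | (W w <= A)%R])).
apply: negligibleS negH => w /= /negP; rewrite -ltNge => Aw.
exists (kn 0 w) => //; split => //=.
by have := kn_le 0 w (kn 0 w); rewrite leqnn /cn divr1 => /esym.
Qed.

End main.

Unset Implicit Arguments.
Unset Strict Implicit.

Theorem lemma4p4 (d : measure_display) (T : measurableType d) (R : realType)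
  (P : probability T R) (F : R -> set (set T)) (X : R -> T -> R)
  (Y : T -> R) (A : R) (tau : T -> R) :
  is_filtration F ->
  (forall t, 0 <= t -> measurable_fun setT (X t)) ->
  (forall w t, 0 <= t -> (fun s => X s w) @ t^'+ --> X t w) ->
  P.-integrable setT (fun w => (Y w)%:E) ->
  0 < A ->
  (forall t, 0 <= t -> {ae P, forall w, `|X t w| <= Y w}) ->
  (forall t, 0 <= t -> cond_exp_le P (F t) (X t) A) ->
  is_stopping_time F tau ->
  cond_exp_le P (stopped_sigma F tau) (stopped_process X tau) A.
Proof.
move=> hF hmX hrc iY A0 hY hce htau.
exact: (final hF hmX hrc iY hY htau hce).
Qed.
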